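(* Let $p$ be a prime and let $d_1,\dots,d_l$ be integers with $1\le d_\lambda\le p$. Then for every integer $s$ with $1\le s\le p-1$, \[ \mathrm{sht}_V(s)\le\frac{(s-1)D_V}{p}. \]
   Context: Here $D_V:=\sum_{\lambda=1}^{l}\frac{(d_\lambda-1)d_\lambda}{2}$ and, for a positive integer $j$ with $p\nmid j$, $\mathrm{sht}_V(j):=\sum_{\lambda=1}^{l}\sum_{i=1}^{d_\lambda-1}\lfloor ij/p\rfloor$. *)

(* Defs.v *)
From mathcomp Require Import all_boot all_order all_algebra.
Set Implicit Arguments. Unset Strict Implicit. Unset Printing Implicit Defensive.

(* D_V := sum_{lambda=1}^l (d_lambda - 1) d_lambda / 2 ;
   (d-1)d is always even, so the nat division by 2 is exact. *)
Definition D_V (l : nat) (d : 'I_l -> nat) : nat :=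
  \sum_(lam < l) (((d lam).-1 * d lam) %/ 2).

Definition sht_V (p l : nat) (d : 'I_l -> nat) (j : nat) : nat :=
  \sum_(lam < l) \sum_(1 <= i < d lam) ((i * j) %/ p).

(* Main.v *)
Require Import Defs.
From mathcomp Require Import all_boot all_order all_algebra.
From mathcomp Require Import zify.
Import Order.TTheory GRing.Theory Num.Theory.

Lemma seq_max (t : seq nat) : t != [::] -> exists2 m, m \in t & forall x, x \in t -> x <= m.
Proof.
elim: t => [//|a t IH] _.
case: (altP (t =P [::])) => [->|tn].
  by exists a => [|x]; rewrite ?inE // => /eqP ->.
have [m mt mx] := IH tn.
case: (leqP a m) => am.
  by exists m => [|x]; rewrite inE ?mt ?orbT // => /orP [/eqP ->//|/mx].
exists a => [|x]; rewrite inE ?eqxx // => /orP [/eqP ->//|/mx xm].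
by apply: leq_trans xm (ltnW am).
Qed.

Lemma uniq_sum_ge (n : nat) (t : seq nat) : size t = n -> uniq t ->
  all (fun x => 0 < x) t -> 'C(n.+1, 2) <= \sum_(x <- t) x.
Proof.
elim: n t => [|n IH] t st ut pt; first by rewrite bin_small.
have tn : t != [::] by apply/eqP => E; rewrite E in st.
have [m mt mx] := @seq_max t tn.
have sm : n.+1 <= m.
  rewrite -st -(size_iota 1 m); apply: (@uniq_leq_size _ t (iota 1 m) ut) => x xt.
  rewrite mem_iota; have := mx x xt; have := allP pt x xt; lia.
rewrite (perm_big _ (perm_to_rem mt)) big_cons binS.
have := IH (rem m t); rewrite size_rem // st => /(_ erefl (rem_uniq _ ut)).
have -> : all (fun x => 0 < x) (rem m t).
  by apply/allP => x /mem_rem; apply/allP.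
move=> /(_ isT) => h; apply: leq_trans (leq_add sm h); rewrite addnC; by rewrite bin1.
Qed.

Lemma block (p s d : nat) : prime p -> 1 <= d <= p -> 1 <= s <= p.-1 ->
  p * (\sum_(1 <= i < d) ((i * s) %/ p)) <= s.-1 * ((d.-1 * d) %/ 2).
Proof.
move=> pp /andP [d1 dp] /andP [s1 sp].
have p0 : 0 < p by apply: prime_gt0.
set t := [seq (i * s) %% p | i <- iota 1 d.-1].
have ht : 'C(d, 2) <= \sum_(x <- t) x.
  have -> : d = d.-1.+1 by lia.
  apply: uniq_sum_ge; first by rewrite size_map size_iota.
    rewrite map_inj_in_uniq ?iota_uniq // => i j; rewrite !mem_iota => hi hj e.
    wlog ij : i j hi hj e / i <= j.
      by move=> W; case: (leqP i j) => h; [|symmetry]; apply: W => //; lia.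
    have : p %| (j - i) * s.
      rewrite mulnBl -eqn_mod_dvd; first by rewrite e.
      by rewrite leq_mul2r ij orbT.
    rewrite Euclid_dvdM // => /orP [|]; move=> /dvdn_leq; lia.
  apply/allP => x /mapP [i]; rewrite mem_iota => hi ->.
  rewrite lt0n; apply/negP => hd; have : p %| i * s by exact: hd.
  by rewrite Euclid_dvdM // => /orP [|] /dvdn_leq; lia.
have hC : \sum_(1 <= i < d) i = 'C(d, 2).
  by rewrite -bin2_sum (@big_ltn _ _ _ 0 d).

have hE : p * (\sum_(1 <= i < d) ((i * s) %/ p)) + \sum_(x <- t) x
          = s * 'C(d, 2).
  rewrite -hC big_map /index_iota subn1 big_distrr big_distrr -big_split /=.
  by apply: eq_bigr => i _; rewrite mulnC (mulnC s) {3}(divn_eq (i * s) p) mulnC.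
have -> : (d.-1 * d) %/ 2 = 'C(d, 2) by rewrite bin2 -divn2 mulnC.
move: hE ht; move: (\sum_(x <- t) x) (\sum_(1 <= i < d) ((i * s) %/ p)) => R Q.
have -> : s = s.-1.+1 by lia.
rewrite mulSn; lia.
Qed.

Theorem lemma3p3 (p l : nat) (d : 'I_l -> nat) (s : nat) :
  prime p ->
  (forall lam : 'I_l, 1 <= d lam <= p) ->
  1 <= s <= p.-1 ->
  ((sht_V p d s)%:R <= ((s.-1 * D_V d)%:R / p%:R :> rat))%R.
Proof.
move=> pp hd hs.
have p0 : 0 < p by apply: prime_gt0.
rewrite ler_pdivlMr ?ltr0n // -natrM ler_nat mulnC.
rewrite /sht_V /D_V big_distrr big_distrr /=.
by apply: leq_sum => lam _; apply: block.
Qed.
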